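(* Let $X$ be a locally compact separable metric space which is not discrete, endowed with its Borel $\sigma$-algebra, let $V$ be a finite-dimensional real vector space and let $|\cdot|_V$ be a seminorm on $V$ which is not strictly convex. Then there exists a sequence $(\mu_n)_{n\in\mathbb{N}}$ of Borel vector measures from $X$ to $V$ converging widely to a Borel vector measure $\mu$ such that $|\mu_n|_V(X)\to|\mu|_V(X)$, but the sequence $(\mathcal{R}(\mu_n))_{n\in\mathbb{N}}$ is constant and different from $\mathcal{R}(\mu)$ (so in particular the ranges do not converge to $\mathcal{R}(\mu)$).
   Context: A seminorm $|\cdot|_V$ is strictly convex if for all linearly independent $v,w\in V$, $|v+w|_V<|v|_V+|w|_V$. A vector measure is a countably additive map $\mu:\Sigma\to V$. The total variation is $|\mu|_V(A)=\sup\{\sum_{i=1}^m|\mu(E_i)|_V : E_1,\dots,E_m\in\Sigma \text{ pairwise disjoint subsets of } A\}$. The range is $\mathcal{R}(\mu)=\overline{\mathrm{conv}}\{\mu(E):E\in\Sigma\}$. Wide convergence of $\mu_n$ to $\mu$ means $\int_X\varphi\,d\mu_n\to\int_X\varphi\,d\mu$ for every $\varphi\in C_c(X,\mathbb{R})$. *)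

(* Defs.v *)
From HB Require Import structures.
From mathcomp Require Import all_boot all_order all_algebra.
From mathcomp Require Import all_classical all_reals all_analysis.
Set Implicit Arguments. Unset Strict Implicit. Unset Printing Implicit Defensive.
Import Order.TTheory GRing.Theory Num.Theory.
Import numFieldNormedType.Exports.
Local Open Scope classical_set_scope.
Local Open Scope ring_scope.

(* V is modelled as 'rV[R]_n (every finite-dimensional real vector space). *)

Section Defs.
Variable R : realType.

Definition is_seminorm (n : nat) (N : 'rV[R]_n -> R) : Prop :=
  [/\ forall x, 0 <= N x,
      forall (a : R) x, N (a *: x) = `|a| * N x
    & forall x y, N (x + y) <= N x + N y].

Definition lin_indep2 (n : nat) (v w : 'rV[R]_n) : Prop :=
  forall a b : R, a *: v + b *: w = 0 -> a = 0 /\ b = 0.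

Definition strictly_convex (n : nat) (N : 'rV[R]_n -> R) : Prop :=
  forall v w, lin_indep2 v w -> N (v + w) < N v + N w.

Variable X : pseudoPMetricType R.

Definition borel_sets : set (set X) := <<s [set A | open A] >>.
Definition BX := g_sigma_algebraType [set A : set X | open A].

Definition separable_space : Prop := exists D : set X, countable D /\ dense D.

Definition non_discrete : Prop := exists x : X, ~ open [set x].

Definition vector_measure (n : nat) (mu : set X -> 'rV[R]_n) : Prop :=
  forall F : nat -> set X, (forall i, borel_sets (F i)) ->
    trivIset setT F ->
    (fun N => \sum_(i < N) mu (F i)) @ \oo --> mu (\bigcup_i F i).

Definition vtotal_variation (n : nat) (N : 'rV[R]_n -> R) (mu : set X -> 'rV[R]_n)
    (A : set X) : \bar R :=
  ereal_sup [set r : \bar R | exists (m : nat) (E : 'I_m -> set X),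
     [/\ forall i, borel_sets (E i) /\ E i `<=` A,
         forall i j, i != j -> E i `&` E j = set0 &
         r = (\sum_(i < m) N (mu (E i)))%:E]].

Definition conv_hull (n : nat) (S : set 'rV[R]_n) : set 'rV[R]_n :=
  [set x | exists m (w : 'I_m -> R) (p : 'I_m -> 'rV[R]_n),
     [/\ forall i, 0 <= w i, \sum_(i < m) w i = 1, forall i, S (p i) &
         x = \sum_(i < m) w i *: p i]].

Definition vrange (n : nat) (mu : set X -> 'rV[R]_n) : set 'rV[R]_n :=
  closure (conv_hull [set mu E | E in borel_sets]).

Definition pos_var (nu : set X -> R) : set BX -> \bar R :=
  fun A => ereal_sup [set (nu B)%:E | B in [set B | borel_sets B /\ B `<=` A]].
Definition neg_var (nu : set X -> R) : set BX -> \bar R :=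
  fun A => ereal_sup [set (- nu B)%:E | B in [set B | borel_sets B /\ B `<=` A]].

Definition signed_integral (nu : set X -> R) (phi : X -> R) : R :=
  fine (\int[pos_var nu]_(x in [set: BX]) (phi x)%:E) -
  fine (\int[neg_var nu]_(x in [set: BX]) (phi x)%:E).

Definition vector_integral (n : nat) (mu : set X -> 'rV[R]_n) (phi : X -> R)
  : 'rV[R]_n := \row_i signed_integral (fun A => mu A 0 i) phi.

Definition Cc (phi : X -> R) : Prop :=
  continuous phi /\ compact (closure [set x | phi x != 0]).

Definition wide_cvg (n : nat) (mu_ : nat -> set X -> 'rV[R]_n)
    (mu : set X -> 'rV[R]_n) : Prop :=
  forall phi, Cc phi ->
    (fun k => vector_integral (mu_ k) phi) @ \oo --> vector_integral mu phi.

End Defs.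

(* Main.v *)
Require Import Defs.
From HB Require Import structures.
From mathcomp Require Import all_boot all_order all_algebra.
From mathcomp Require Import all_classical all_reals all_analysis.
From mathcomp Require Import measurable_realfun.
From mathcomp Require Import ring lra.
Import Order.TTheory GRing.Theory Num.Theory.
Import numFieldNormedType.Exports.
Local Open Scope classical_set_scope.
Local Open Scope ring_scope.

Lemma sum_atmost1 (V : nmodType) m (P : 'I_m -> bool) (c : V) :
  (forall i j, P i -> P j -> i = j) ->
  \sum_(i < m) (if P i then c else 0) = if [exists i, P i] then c else 0.
Proof.
move=> H; case: existsP => [[j Pj]|nP].
  rewrite (bigD1 j) //= Pj big1 ?addr0 // => i ij.
  case Pi: (P i) => //; have := H _ _ Pi Pj => e; by rewrite e eqxx in ij.
by rewrite big1 // => i _; case: ifP => // Pi; exfalso; apply: nP; exists i.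
Qed.

Section S.
Variable R : realType.
Variable X : pseudoPMetricType R.
Hypothesis hX : hausdorff_space X.

Lemma borel_set1 (x : X) : borel_sets [set x].
Proof.
have c : closed [set x] by apply: accessible_closed_set1; apply: hausdorff_accessible.
have o : open (~` [set x]) by exact: closed_openC.
have m : measurable (~` [set x] : set (BX X)) by apply: sub_sigma_algebra.
by have := measurableC m; rewrite setCK.
Qed.

Lemma borel_setT : borel_sets (@setT X).
Proof. exact: (@measurableT _ (BX X)). Qed.

Lemma borel_set0 : borel_sets (@set0 X).
Proof. exact: (@measurable0 _ (BX X)). Qed.

Lemma borel_setC (A : set X) : borel_sets A -> borel_sets (~` A).
Proof. exact: (@measurableC _ (BX X)). Qed.

Lemma borel_setU (A B : set X) : borel_sets A -> borel_sets B -> borel_sets (A `|` B).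
Proof. exact: (@measurableU _ (BX X)). Qed.

Definition pt {V : zmodType} (x : X) (v : V) (E : set X) : V :=
  if `[< E x >] then v else 0.

Definition tp {V : zmodType} (x y : X) (v w : V) (E : set X) : V :=
  pt x v E + pt y w E.

Lemma pt_in {V : zmodType} (x : X) (v : V) E : E x -> pt x v E = v.
Proof. by move=> h; rewrite /pt asboolT. Qed.
Lemma pt_out {V : zmodType} (x : X) (v : V) E : ~ E x -> pt x v E = 0.
Proof. by move=> h; rewrite /pt asboolF. Qed.

Lemma pt_cvg n (x : X) (v : 'rV[R]_n) (F : nat -> set X) :
  trivIset setT F ->
  (fun N => \sum_(i < N) pt x v (F i)) @ \oo --> pt x v (\bigcup_i F i).
Proof.
move=> tF.
have H N : \sum_(i < N) pt x v (F i) = if [exists i : 'I_N, `[< F i x >]] then v else 0.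
  apply: sum_atmost1 => i j /asboolP Fi /asboolP Fj; apply: val_inj.
  by apply: tF => //; exists x.
rewrite /pt; case: asboolP => [[j _ Fj]|nF].
  apply: cvg_near_cst; exists j.+1 => // N /= hN; rewrite H.
  case: existsP => // -[]; by exists (Ordinal hN); apply/asboolP.
apply: cvg_near_cst; exists 0%N => // N _; rewrite H.
case: existsP => // -[i /asboolP Fi]; exfalso; apply: nF; by exists i.
Qed.

Lemma tp_vm n (x y : X) (v w : 'rV[R]_n) : vector_measure (tp x y v w).
Proof.
move=> F _ tF; rewrite /tp.
have -> : (fun N => \sum_(i < N) (pt x v (F i) + pt y w (F i))) =
  (fun N => \sum_(i < N) pt x v (F i)) + (fun N => \sum_(i < N) pt y w (F i)).
  by apply/funext => N; rewrite /= big_split.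
exact: cvgD (pt_cvg _ x v _ tF) (pt_cvg _ y w _ tF).
Qed.

Definition S4 {n} (v w : 'rV[R]_n) : set 'rV[R]_n :=
  [set z | z = 0 \/ z = v \/ z = w \/ z = v + w].

Lemma tp_vals_sub n (x y : X) (v w : 'rV[R]_n) :
  [set tp x y v w E | E in borel_sets (X:=X)] `<=` S4 v w.
Proof.
move=> _ [E _ <-]; rewrite /tp /pt /S4 /=.
by do 2 case: asboolP => _; rewrite ?addr0 ?add0r; tauto.
Qed.

Lemma tp_vals n (x y : X) (v w : 'rV[R]_n) : x <> y ->
  [set tp x y v w E | E in borel_sets (X:=X)] = S4 v w.
Proof.
move=> xy; apply/seteqP; split; first exact: tp_vals_sub.
move=> z [->|[->|[->|->]]].
- exists set0; first exact: borel_set0.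
  by rewrite /tp !pt_out // addr0.
- exists [set x]; first exact: borel_set1.
  by rewrite /tp pt_in // pt_out ?addr0 // => /= e; apply: xy.
- exists [set y]; first exact: borel_set1.
  by rewrite /tp (@pt_out _ x) ?add0r ?(@pt_in _ y) //= => e; apply: xy; rewrite e.
- exists setT; first exact: borel_setT.
  by rewrite /tp !pt_in.
Qed.

Lemma conv_seg n (u : 'rV[R]_n) (S : set 'rV[R]_n) :
  S `<=` [set z | z = 0 \/ z = u] ->
  conv_hull S `<=` [set t *: u | t in `[0, 1]%classic].
Proof.
move=> Su _ [m [w [p [w0 w1 Sp ->]]]].
pose c i : R := (p i != 0)%:R.
have pc i : p i = c i *: u.
  rewrite /c; have [->|pn0] := eqVneq (p i) 0; first by rewrite scale0r.
  rewrite scale1r; case: (Su _ (Sp i)) => // e.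
  by rewrite e eqxx in pn0.
exists (\sum_(i < m) w i * c i).
  rewrite /= in_itv /=; apply/andP; split.
    by apply: sumr_ge0 => i _; rewrite mulr_ge0 // /c ler0n.
  rewrite -w1; apply: ler_sum => i _; rewrite -[leRHS]mulr1.
  by apply: ler_wpM2l => //; rewrite /c; case: (_ != _).
by rewrite scaler_suml; apply: eq_bigr => i _; rewrite pc scalerA.
Qed.

Lemma seg_closed n (u : 'rV[R]_n) : closed [set t *: u | t in `[0, 1]%classic].
Proof.
apply: compact_closed; first exact: norm_hausdorff.
apply: continuous_compact; last exact: segment_compact.
apply: continuous_subspaceT => t; exact: scalel_continuous.
Qed.

Lemma vrange_seg n (u : 'rV[R]_n) (mu : set X -> 'rV[R]_n) :
  [set mu E | E in borel_sets (X:=X)] `<=` [set z | z = 0 \/ z = u] ->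
  vrange mu `<=` [set t *: u | t in `[0, 1]%classic].
Proof.
move=> H; move/closure_id: (seg_closed _ u) => ->.
apply: closureS; exact: conv_seg.
Qed.

Lemma in_vrange n (mu : set X -> 'rV[R]_n) E : borel_sets E -> vrange mu (mu E).
Proof.
move=> bE; apply: subset_closure.
exists 1%N, (fun _ => 1), (fun _ => mu E); split => //.
- by rewrite big_ord1.
- by move=> _; exists E.
- by rewrite big_ord1 scale1r.
Qed.

Lemma semi0 n (N : 'rV[R]_n -> R) : is_seminorm N -> N 0 = 0.
Proof. by case=> _ hZ _; rewrite -(scale0r (0 : 'rV[R]_n)) hZ normr0 mul0r. Qed.

Lemma Npt n (N : 'rV[R]_n -> R) (x : X) v E : is_seminorm N ->
  N (pt x v E) = pt x (N v) E.
Proof. by move=> hN; rewrite /pt; case: asboolP => // _; rewrite semi0. Qed.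

Lemma tv_tp n (N : 'rV[R]_n -> R) (x y : X) (v w : 'rV[R]_n) : x <> y ->
  is_seminorm N ->
  vtotal_variation N (tp x y v w) setT = (N v + N w)%:E.
Proof.
move=> xy hN; have hN' := hN; case: hN' => N0 _ Ntri.
apply/eqP; rewrite eq_le; apply/andP; split.
  apply: ge_ereal_sup => _ [m [E [hE hdisj ->]]]; rewrite lee_fin.
  have uq (z : X) i j : `[< E i z >] -> `[< E j z >] -> i = j.
    move=> /asboolP Ei /asboolP Ej; case: (eqVneq i j) => // /hdisj h.
    by have : (E i `&` E j) z by []; rewrite h.
  have sx (z : X) (c : R) : 0 <= c -> \sum_(i < m) pt z c (E i) <= c.
    move=> c0; rewrite /pt (@sum_atmost1 _ _ _ c (uq z)); by case: ifP.
  apply: (le_trans (y := \sum_(i < m) (pt x (N v) (E i) + pt y (N w) (E i)))).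
    apply: ler_sum => i _; rewrite /tp -!Npt //; exact: Ntri.
  by rewrite big_split /=; apply: lerD; apply: sx.
apply: ereal_sup_ubound.
exists 2%N, (fun i : 'I_2 => if i == ord0 then [set x] else ~` [set x]); split.
- move=> i; split => //; case: ifP => _; [exact: borel_set1|].
  apply: borel_setC; exact: borel_set1.
- move=> [[|[|//]] ?] [[|[|//]] ?] //= _; apply/seteqP; split => // z [] //.
- rewrite big_ord_recr big_ord1 /=.
  rewrite /tp pt_in // pt_out ?addr0 //; last by move=> /= e; apply: xy.
  by rewrite (@pt_out _ x) ?add0r ?(@pt_in _ y) //= => e; apply: xy; rewrite e.
Qed.

Lemma cont_meas (phi : X -> R) : continuous phi ->
  measurable_fun (setT : set (BX X)) (fun x : BX X => (phi x)%:E).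
Proof.
move=> cf; apply/measurable_EFinP.
apply: (measurability _ (RGenOpens.measurableE R)).
move=> _ [_ [a [b ->]] <-]; rewrite setTI.
apply: sub_sigma_algebra => /=.
apply: (continuousP phi).1 => //; exact: interval_open.
Qed.

Lemma max0_ge0 (a : R) : 0 <= Num.max a 0.
Proof. by rewrite le_max lexx orbT. Qed.

Definition nn (a : R) : {nonneg R} := NngNum (max0_ge0 a).

Definition M2 (x y : X) (a b : R) : set (BX X) -> \bar R :=
  measure_add (mscale (nn a) (@dirac _ (BX X) x R))
              (mscale (nn b) (@dirac _ (BX X) y R)).

Lemma M2E (x y : X) a b (A : set (BX X)) :
  M2 x y a b A = (pt x (Num.max a 0) A + pt y (Num.max b 0) A)%:E.
Proof.
rewrite /M2 measure_addE /=; unfold mscale; rewrite /pt /=; unfold dirac, indic. rewrite -!EFinM -EFinD; congr EFin.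
by case: asboolP => h1; case: asboolP => h2; rewrite ?(mem_set h1) ?(memNset h1) ?(mem_set h2) ?(memNset h2) /= ?mulr1 ?mulr0.
Qed.

Lemma pos_var_pt (x y : X) (a b : R) (nu : set X -> R) : x <> y ->
  (forall B, nu B = pt x a B + pt y b B) ->
  pos_var nu = M2 x y a b.
Proof.
move=> xy hnu; apply/funext => A; rewrite M2E.
have ptle (z : X) (c : R) (B : set X) : B `<=` A -> pt z c B <= pt z (Num.max c 0) A.
  move=> BA; rewrite /pt; case: asboolP => Bz.
    by rewrite asboolT ?le_max ?lexx //; exact: BA.
  by case: asboolP => _; rewrite ?max0_ge0.
apply/eqP; rewrite eq_le; apply/andP; split.
  apply: ge_ereal_sup => _ [B [_ BA] <-]; rewrite lee_fin hnu.
  by apply: lerD; apply: ptle.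
apply: ereal_sup_ubound.
pose Bx := if `[< A x /\ 0 <= a >] then [set x] else set0.
pose By := if `[< A y /\ 0 <= b >] then [set y] else set0.
have mc (P : Prop) (z t : X) : (if `[< P >] then [set t] else set0) z <-> P /\ z = t.
  case: asboolP => h /=; split; [by move=> ->|by case=> _ ->|by []|by case].
exists (Bx `|` By).
  split.
    by apply: borel_setU; rewrite /Bx /By; case: asboolP => _;
      (exact: borel_set1 || exact: borel_set0).
  move=> z [/mc [[Az _] ->]|/mc [[Az _] ->]] //.
have hx : (Bx `|` By) x <-> (A x /\ 0 <= a).
  split; first by case=> /mc [] // _ e; exfalso; apply: xy.
  by move=> h; left; apply/mc.
have hy : (Bx `|` By) y <-> (A y /\ 0 <= b).
  split; first by case=> /mc [] // _ e; exfalso; apply: xy.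
  by move=> h; right; apply/mc.
have key (z : X) (c : R) (hz : (Bx `|` By) z <-> (A z /\ 0 <= c)) :
    pt z c (Bx `|` By) = pt z (Num.max c 0) A.
  rewrite /pt; case: asboolP => hB; case: asboolP => hA.
  - by have [_ c0] := hz.1 hB; rewrite max_l.
  - by exfalso; apply: hA; case: (hz.1 hB).
  - case: (leP 0 c) => c0 //.
    by exfalso; apply: hB; apply: hz.2.
  - by [].
by rewrite hnu (key _ _ hx) (key _ _ hy).
Qed.

Lemma maxpn (r : R) : Num.max r 0 - Num.max (- r) 0 = r.
Proof. by case: (leP 0 r) => h; case: (leP 0 (- r)) => h'; lra. Qed.

Lemma int_M2 (x y : X) (a b : R) (phi : X -> R) : continuous phi ->
  (\int[M2 x y a b]_(z in [set: BX X]) (phi z)%:E)%E =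
  (Num.max a 0 * phi x + Num.max b 0 * phi y)%:E.
Proof.
move=> cphi; have mphi := cont_meas _ cphi.
rewrite integralE /M2.
rewrite !ge0_integral_measure_add //.
rewrite !ge0_integral_mscale //; try (by apply: measurable_funepos); try (by apply: measurable_funeneg).
rewrite !integral_dirac //; try (by apply: measurable_funepos); try (by apply: measurable_funeneg).
rewrite !diracT !mul1e !funeposE !funenegE /=.
rewrite -[(0%R : \bar R)]/(0%:E) -!EFin_max -!EFinM -!EFinD; congr EFin.
  by rewrite -[in RHS](maxpn (phi x)) -[in RHS](maxpn (phi y)); ring.
- exact: (measurable_funeneg mphi).
- exact: (measurable_funepos mphi).
Qed.

Lemma si_pt (x y : X) (a b : R) (nu : set X -> R) (phi : X -> R) : x <> y ->
  (forall B, nu B = pt x a B + pt y b B) -> continuous phi ->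
  signed_integral nu phi = a * phi x + b * phi y.
Proof.
move=> xy hnu cphi; rewrite /signed_integral (@pos_var_pt x y a b nu xy hnu).
have -> : neg_var nu = pos_var (fun B => - nu B) by [].
rewrite (@pos_var_pt x y (- a) (- b)) //; last first.
  by move=> B; rewrite hnu /pt; case: asboolP => _; case: asboolP => _; ring.
rewrite !int_M2 //=.
by rewrite -[in RHS](maxpn a) -[in RHS](maxpn b); ring.
Qed.

Lemma vi_tp n (x y : X) (v w : 'rV[R]_n) (phi : X -> R) : x <> y ->
  continuous phi -> vector_integral (tp x y v w) phi = phi x *: v + phi y *: w.
Proof.
move=> xy cphi; apply/rowP => i; rewrite !mxE.
rewrite (@si_pt x y (v 0 i) (w 0 i)) //; first by rewrite mulrC [_ * phi y]mulrC.
by move=> B; rewrite /tp /pt !mxE; case: asboolP => _; case: asboolP => _; rewrite ?mxE.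
Qed.
End S.

Arguments tp {R X V} x y v w E.
Arguments pt {R X V} x v E.
Arguments tp_vm {R X n} x y v w.
Arguments vi_tp {R X} hX {n} x y v w.
Arguments tv_tp {R X} hX {n}.
Arguments tp_vals {R X} hX {n}.
Arguments in_vrange {R X n}.
Arguments vrange_seg {R X n}.
Arguments tp_vals_sub {R X n}.
Arguments semi0 {R n N}.
Arguments pt_in {R X V} x v E.
Arguments pt_out {R X V} x v E.
Arguments borel_set1 {R X} hX x.
Theorem proposition1p2 (R : realType) (X : pseudoPMetricType R) (n : nat)
    (N : 'rV[R]_n -> R) :
  hausdorff_space X ->
  locally_compact [set: X] ->
  separable_space X ->
  non_discrete X ->
  is_seminorm N ->
  ~ strictly_convex N ->
  exists (mu_ : nat -> set X -> 'rV[R]_n) (mu : set X -> 'rV[R]_n),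
    [/\ (forall k, vector_measure (mu_ k)) /\ vector_measure mu,
        wide_cvg mu_ mu,
        (fun k => vtotal_variation N (mu_ k) setT) @ \oo
          --> vtotal_variation N mu setT,
        forall k, vrange (mu_ k) = vrange (mu_ 0%N)
      & vrange (mu_ 0%N) <> vrange mu].
Proof.
move=> hX _ _ [x0 hx0] hN hsc.
have [v [w [vw Nvw]]] : exists v w, lin_indep2 v w /\ N (v + w) = N v + N w.
  apply: contrapT => hn; apply: hsc => v w vw.
  case: hN => _ _ tri; rewrite lt_neqAle tri andbT; apply/eqP => e.
  by apply: hn; exists v, w.
have H k : exists z, ball x0 k.+1%:R^-1 z /\ z <> x0.
  apply: contrapT => hn; apply: hx0; rewrite openE => z /= ->.
  apply/nbhs_ballP; exists k.+1%:R^-1 => //= t bt.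
  by apply: contrapT => ne; apply: hn; exists t.
have [y hy] := choice H.
have yx : y @ \oo --> x0.
  apply/cvg_ballP => e e0; near=> k; apply: (le_ball _ (hy k).1).
  near: k; have := @near_infty_natSinv_lt R (PosNum e0).
  by apply: filterS => k /ltW.
exists (fun k => tp x0 (y k) v w), (tp x0 (y 0%N) (v + w) 0); split.
- by split => [k|]; apply: tp_vm.
- move=> phi [cphi _].
  have ne k : x0 <> y k by move=> e; apply: (hy k).2; rewrite e.
  rewrite (vi_tp hX) //.
  have -> : (fun k => vector_integral (tp x0 (y k) v w) phi) =
    (fun k => phi x0 *: v + phi (y k) *: w).
    by apply/funext => k; rewrite (vi_tp hX).
  rewrite scaler0 addr0 scalerDr.
  apply: cvgD; first exact: cvg_cst.
  apply: cvgZr_tmp; exact: (continuous_cvg _ (cphi x0) yx).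
- have ne k : x0 <> y k by move=> e; apply: (hy k).2; rewrite e.
  rewrite (tv_tp hX) // (semi0 hN) addr0 Nvw.
  have -> : (fun k => vtotal_variation N (tp x0 (y k) v w) setT) =
    (fun k => (N v + N w)%:E) by apply/funext => k; rewrite (tv_tp hX).
  exact: cvg_cst.
- have ne k : x0 <> y k by move=> e; apply: (hy k).2; rewrite e.
  by move=> k; rewrite /vrange !(tp_vals hX).
- have ne k : x0 <> y k by move=> e; apply: (hy k).2; rewrite e.
  move=> eq.
  have hv : vrange (tp x0 (y 0%N) (v + w) 0) v.
    rewrite -eq.
    have := in_vrange (tp x0 (y 0%N) v w) _ (borel_set1 hX x0).
    suff -> : tp x0 (y 0%N) v w [set x0] = v by [].
    by rewrite /tp pt_in // pt_out ?addr0 // => /= e; apply: (ne 0%N).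
  have := vrange_seg (v + w) (tp x0 (y 0%N) (v + w) 0) _ v hv.
  case.
    move=> z /(tp_vals_sub x0 (y 0%N) (v + w) 0) [->|[->|[->|->]]]; by [left|right|left|right; rewrite addr0].
  move=> t _ e.
  have h0 : (1 - t) *: v + (- t) *: w = 0.
    rewrite scalerBl scale1r scaleNr -{1}e scalerDr.
    by rewrite [t *: v + _]addrC addrK subrr.
  have [h1 h2] := vw _ _ h0.
  have t0 : t = 0 by rewrite -[t]opprK h2 oppr0.
  by move: h1; rewrite t0 subr0 => /eqP; rewrite oner_eq0.
Unshelve. all: end_near.
Qed.
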